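(* Let $X\subseteq\mathbb{R}^m$, $f:X\to\mathbb{R}^d$ with $a_{i0}\le f_i(x)\le a_{in}$ on $X$, and $\theta=(\theta_1,\dots,\theta_\kappa):\mathbb{R}^d\to\mathbb{R}^\kappa$ a vector of multilinear functions $\theta_k(s_{1n},\dots,s_{dn})=\sum_{I\in\mathcal{I}_k}c^k_I\prod_{i\in I}s_{in}$. Let $u:X\to\mathbb{R}^{d\times(n+1)}$ be convex with $u_{i0}(x)=a_{i0}$, $u_{in}(x)=f_i(x)$, $u_{ij}(x)\le\min\{f_i(x),a_{ij}\}$ ($j\in[n-1]$), and $W$ a convex set containing $\{(x,f(x))\mid x\in X\}$. Then, identifying $f$ with $s_{\cdot n}=(s_{1n},\dots,s_{dn})$, the set $\{(\vartheta,w,s,\delta)\mid(\vartheta,w,s)\text{ satisfies (HQ)},\ (Z(s),\delta)\text{ satisfies (Inc-1)}\}$ is an ideal formulation of $\bigcup_{H\in\mathcal{H}}\operatorname{conv}\bigl(\{(f,\theta(f))\mid f\in H\}\bigr)$, and adding $u(x)\le s$ and $(x,s_{\cdot n})\in W$ yields an MICP relaxation of the graph of $\theta\circ f$.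
   Context: $d,n,\kappa\ge1$, $[k]=\{1,\dots,k\}$, $E=\{0,\dots,n\}^d$; each $\mathcal{I}_k$ is a collection of subsets of $[d]$, $c^k_I\in\mathbb{R}$. $a\in\mathbb{R}^{d\times(n+1)}$ with $a_{i0}<\dots<a_{in}$; integers $0=\tau(i,0)<\dots<\tau(i,l_i)=n$; $\mathcal{H}=\{\prod_i[a_{i\tau(i,t_i-1)},a_{i\tau(i,t_i)}]\mid t_i\in[l_i]\}$. $\Delta_i=\{z_i\in\mathbb{R}^{n+1}\mid1=z_{i0}\ge\dots\ge z_{in}\ge0\}$. (Inc-1): $z_i\in\Delta_i$, $\delta_{it}\in\{0,1\}$, $z_{i\tau(i,t)}\ge\delta_{it}\ge z_{i\tau(i,t)+1}$ ($i\in[d]$, $t\in[l_i-1]$). $Z(s)_{i0}=1$, $Z(s)_{ij}=(s_{ij}-s_{i,j-1})/(a_{ij}-a_{i,j-1})$. $v_{ij}\in\mathbb{R}^{n+1}$ has $k$-th component $a_{i,\min\{k,j\}}$. System (HQ) in $(\vartheta,w,s)$, $w=(w_p)_{p\in E}$: $\vartheta_k=\sum_{I\in\mathcal{I}_k}c^k_I\sum_{p\in E}(\prod_{i\in I}a_{ip_i})w_p$ for $k\in[\kappa]$; $w\ge0$, $\sum_{p\in E}w_p=1$; $s_i=\sum_{j=0}^nv_{ij}\sum_{p\in E:p_i=j}w_p$ for $i\in[d]$. Ideal formulation: projection onto $(f,\vartheta)$ equals the target set and every extreme point of the continuous relaxation has binary $\delta$. MICP relaxation of the graph: its projection onto $(x,\vartheta)$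 contains $\{(x,\theta(f(x)))\mid x\in X\}$ and its continuous relaxation is convex. *)

(* Defs.v *)
From HB Require Import structures.
From mathcomp Require Import all_boot all_order all_algebra.
From mathcomp Require Import reals.
Set Implicit Arguments. Unset Strict Implicit. Unset Printing Implicit Defensive.
Import Order.TTheory GRing.Theory Num.Theory.
Local Open Scope ring_scope.

Definition cvx_set (R : numDomainType) (V : lmodType R) (C : V -> Prop) :=
  forall p q (t : R), C p -> C q -> 0 <= t <= 1 -> C (t *: p + (1 - t) *: q).

Definition convex_fun_on (R : numDomainType) (V : lmodType R) (D : V -> Prop)
    (g : V -> R) :=
  forall x y (t : R), D x -> D y -> 0 <= t <= 1 ->
    g (t *: x + (1 - t) *: y) <= t * g x + (1 - t) * g y.

Definition conv_hull (R : numDomainType) (V : lmodType R) (A : V -> Prop) (x : V) :=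
  exists (k : nat) (lam : 'I_k -> R) (p : 'I_k -> V),
    (forall i, 0 <= lam i) /\ \sum_(i < k) lam i = 1 /\
    (forall i, A (p i)) /\ x = \sum_(i < k) lam i *: p i.

Definition extreme_point (R : numDomainType) (V : lmodType R) (C : V -> Prop) (p : V) :=
  C p /\ forall q r (t : R), C q -> C r -> 0 < t < 1 ->
    p = t *: q + (1 - t) *: r -> q = r.

Definition ideal_formulation (R : numDomainType) (V U : lmodType R)
    (S Srelax : V -> Prop) (proj : V -> U) (Tset : U -> Prop) (isbin : V -> Prop) :=
  (forall y, (exists p, S p /\ proj p = y) <-> Tset y) /\
  (forall p, extreme_point Srelax p -> isbin p).

Definition micp_relaxation (R : numDomainType) (V U : lmodType R)
    (M Mrelax : V -> Prop) (proj : V -> U) (G : U -> Prop) :=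
  (forall y, G y -> exists p, M p /\ proj p = y) /\ cvx_set Mrelax.

Definition bin01 (R : numDomainType) (r : R) := r = 0 \/ r = 1.
Definition rel01 (R : numDomainType) (r : R) := 0 <= r <= 1.

(* Indices: i in [d] is 'I_d (0-based); j in {0..n} is 'I_n.+1 or a nat <= n.
   a is the d x (n+1) matrix of breakpoints, accessed at nat indices by aa. *)

Definition aa (R : numDomainType) (d n : nat) (a : 'M[R]_(d, n.+1)) (i : 'I_d) (j : nat) : R :=
  a i (inord j).

Notation grid d n := {ffun 'I_d -> 'I_n.+1}.

(* index set of delta: pairs (i, t) with t in [l_i - 1]; t is encoded as k+1, k : 'I_(l_i - 1) *)
Notation didx l := {i : 'I_ _ & 'I_(l i).-1}.

Definition theta (R : numDomainType) (d kap : nat) (II : 'I_kap -> {set {set 'I_d}})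
    (c : 'I_kap -> {set 'I_d} -> R) (g : 'rV[R]_d) : 'rV[R]_kap :=
  \row_k \sum_(I in II k) c k I * \prod_(i in I) g 0 i.

Definition HQ (R : numDomainType) (d n kap : nat) (a : 'M[R]_(d, n.+1))
    (II : 'I_kap -> {set {set 'I_d}}) (c : 'I_kap -> {set 'I_d} -> R)
    (th : 'rV[R]_kap) (w : {ffun grid d n -> R^o}) (s : 'M[R]_(d, n.+1)) : Prop :=
  (forall k, th 0 k = \sum_(I in II k) c k I *
                         \sum_(p : grid d n) (\prod_(i in I) a i (p i)) * w p) /\
  (forall p, 0 <= w p) /\ \sum_(p : grid d n) w p = 1 /\
  (forall i (k : 'I_n.+1),
     s i k = \sum_(j < n.+1) aa a i (minn k j) * \sum_(p : grid d n | p i == j) w p).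

(* Z(s), as a function of i and a nat index j (meaningful for j <= n) *)
Definition Zmap (R : numFieldType) (d n : nat) (a s : 'M[R]_(d, n.+1)) (i : 'I_d) (j : nat) : R :=
  if j == 0%N then 1
  else (aa s i j - aa s i j.-1) / (aa a i j - aa a i j.-1).

(* (Inc-1) without the integrality condition on delta *)
Definition Inc1_lin (R : numDomainType) (d n : nat) (l : 'I_d -> nat)
    (tau : 'I_d -> nat -> nat) (z : 'I_d -> nat -> R) (dl : {ffun didx l -> R^o}) : Prop :=
  (forall i, z i 0%N = 1 /\ (forall j, (j < n)%N -> z i j.+1 <= z i j) /\ 0 <= z i n) /\
  (forall k : didx l,
     z (tag k) (tau (tag k) (tagged k).+1).+1 <= dl k <= z (tag k) (tau (tag k) (tagged k).+1)).

Notation PT R d n kap l :=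
  ('rV[R]_kap * {ffun grid d n -> R^o} * 'M[R]_(d, n.+1) * {ffun didx l -> R^o})%type.

(* the set {(vartheta,w,s,delta) | HQ, (Z(s),delta) in Inc-1}, with the condition dc
   imposed on each delta: dc = bin01 gives the set itself, dc = rel01 its
   continuous relaxation *)
Definition Sset (R : numFieldType) (d n kap : nat) (a : 'M[R]_(d, n.+1))
    (l : 'I_d -> nat) (tau : 'I_d -> nat -> nat)
    (II : 'I_kap -> {set {set 'I_d}}) (c : 'I_kap -> {set 'I_d} -> R)
    (dc : R -> Prop) (p : PT R d n kap l) : Prop :=
  let: (th, w, s, dl) := p in
  HQ a II c th w s /\ Inc1_lin n tau (Zmap a s) dl /\ forall k, dc (dl k).

Definition lastcol (R : numDomainType) (d n : nat) (s : 'M[R]_(d, n.+1)) : 'rV[R]_d :=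
  \row_i s i ord_max.

Definition proj_fth (R : numDomainType) (d n kap : nat) (l : 'I_d -> nat)
    (p : PT R d n kap l) : 'rV[R]_d * 'rV[R]_kap :=
  let: (th, w, s, dl) := p in (lastcol s, th).

Definition delta_binary (R : numDomainType) (d n kap : nat) (l : 'I_d -> nat)
    (p : PT R d n kap l) : Prop := forall k, bin01 (p.2 k).

(* the box of H indexed by t, t_i in [l_i] *)
Definition box (R : numDomainType) (d n : nat) (a : 'M[R]_(d, n.+1))
    (tau : 'I_d -> nat -> nat) (t : 'I_d -> nat) (g : 'rV[R]_d) : Prop :=
  forall i, aa a i (tau i (t i).-1) <= g 0 i <= aa a i (tau i (t i)).

Definition target (R : numDomainType) (d n kap : nat) (a : 'M[R]_(d, n.+1))
    (l : 'I_d -> nat) (tau : 'I_d -> nat -> nat)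
    (II : 'I_kap -> {set {set 'I_d}}) (c : 'I_kap -> {set 'I_d} -> R)
    (y : 'rV[R]_d * 'rV[R]_kap) : Prop :=
  exists t : 'I_d -> nat, (forall i, 0 < t i <= l i)%N /\
    conv_hull (fun y' => exists g, box a tau t g /\ y' = (g, theta II c g)) y.

Definition Mset (R : numFieldType) (m d n kap : nat) (a : 'M[R]_(d, n.+1))
    (l : 'I_d -> nat) (tau : 'I_d -> nat -> nat)
    (II : 'I_kap -> {set {set 'I_d}}) (c : 'I_kap -> {set 'I_d} -> R)
    (X : 'rV[R]_m -> Prop) (u : 'rV[R]_m -> 'M[R]_(d, n.+1))
    (W : 'rV[R]_m * 'rV[R]_d -> Prop)
    (dc : R -> Prop) (q : 'rV[R]_m * PT R d n kap l) : Prop :=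
  let: (x, p) := q in
  X x /\ Sset a tau II c dc p /\ (forall i j, u x i j <= (p.1.2 : 'M[R]_(d, n.+1)) i j) /\
  W (x, lastcol p.1.2).

Definition proj_xth (R : numDomainType) (m d n kap : nat) (l : 'I_d -> nat)
    (q : 'rV[R]_m * PT R d n kap l) : 'rV[R]_m * 'rV[R]_kap :=
  (q.1, q.2.1.1.1).

Definition graph_thf (R : numDomainType) (m d kap : nat)
    (II : 'I_kap -> {set {set 'I_d}}) (c : 'I_kap -> {set 'I_d} -> R)
    (X : 'rV[R]_m -> Prop) (f : 'rV[R]_m -> 'rV[R]_d) (y : 'rV[R]_m * 'rV[R]_kap) : Prop :=
  X y.1 /\ y.2 = theta II c (f y.1).

(* Main.v *)
Require Import Defs.
From HB Require Import structures.
From mathcomp Require Import all_boot all_order all_algebra.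
From mathcomp Require Import reals.
From mathcomp Require Import ring lra zify.
Import Order.TTheory GRing.Theory Num.Theory.
Local Open Scope ring_scope.
Set Implicit Arguments. Unset Strict Implicit. Unset Printing Implicit Defensive.

Definition tl (R : numDomainType) d n (w : {ffun grid d n -> R^o}) (i : 'I_d) (j : nat) : R :=
  \sum_(p : grid d n | (j <= p i)%N) w p.

Definition thOf (R : numDomainType) d n kap (a : 'M[R]_(d, n.+1))
    (II : 'I_kap -> {set {set 'I_d}}) (c : 'I_kap -> {set 'I_d} -> R)
    (w : {ffun grid d n -> R^o}) : 'rV[R]_kap :=
  \row_k \sum_(I in II k) c k I * \sum_(p : grid d n) (\prod_(i in I) a i (p i)) * w p.

Definition sOf (R : numDomainType) d n (a : 'M[R]_(d, n.+1)) (w : {ffun grid d n -> R^o})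
  : 'M[R]_(d, n.+1) :=
  \matrix_(i, k) \sum_(j < n.+1) aa a i (minn k j) * \sum_(p : grid d n | p i == j) w p.

Lemma HQP (R : numDomainType) d n kap (a : 'M[R]_(d, n.+1)) II c th w s :
  @HQ R d n kap a II c th w s <->
  [/\ th = thOf a II c w, s = sOf a w, \sum_p w p = 1 & forall p, 0 <= w p].
Proof.
split.
  move=> [H1 [H2 [H3 H4]]]; split => //.
    by apply/rowP => k; rewrite H1 mxE.
  by apply/matrixP => i k; rewrite H4 mxE.
move=> [-> -> H3 H4]; split; first by move=> k; rewrite mxE.
by split => //; split => // i k; rewrite mxE.
Qed.

Definition linf (R : numDomainType) (U V : lmodType R) (f : U -> V) :=
  (forall x y, f (x + y) = f x + f y) /\ (forall (r : R) x, f (r *: x) = r *: f x).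

Lemma linf_sum (R : numDomainType) (U V : lmodType R) (f : U -> V) k
   (lam : 'I_k -> R) (W : 'I_k -> U) :
  linf f -> f (\sum_(j < k) lam j *: W j) = \sum_(j < k) lam j *: f (W j).
Proof.
move=> [fD fZ].
have f0 : f 0 = 0 by rewrite -(scale0r (0 : U)) fZ scale0r.
rewrite (big_morph f fD f0); apply: eq_bigr => j _; by rewrite fZ.
Qed.

Lemma linf_comb (R : numDomainType) (U V : lmodType R) (f : U -> V) x y (r s : R) :
  linf f -> f (r *: x + s *: y) = r *: f x + s *: f y.
Proof. by move=> [fD fZ]; rewrite fD !fZ. Qed.

Lemma scaleRE (R : numDomainType) (u v : R) : (u *: (v : R^o)) = u * v.
Proof. by []. Qed.

Lemma sum_combE (R : numDomainType) (T : finType) (P : pred T) (G : T -> R)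
  (x y : {ffun T -> R^o}) (r s : R) :
  \sum_(p | P p) G p * (r *: x + s *: y) p =
  r * \sum_(p | P p) G p * x p + s * \sum_(p | P p) G p * y p.
Proof.
rewrite !mulr_sumr -big_split; apply: eq_bigr => p _; rewrite !ffunE /=.
rewrite !scaleRE; ring.
Qed.

Lemma linf_of (R : numDomainType) (U V : lmodType R) (f : U -> V) :
  (forall x y (r s : R), f (r *: x + s *: y) = r *: f x + s *: f y) -> linf f.
Proof.
move=> H; split.
  by move=> x y; have := H x y 1 1; rewrite !scale1r.
move=> r x; have := H x 0 r 0; rewrite !scale0r !addr0 => ->; done.
Qed.

Lemma tl_lin (R : numDomainType) d n i j : linf (fun w : {ffun grid d n -> R^o} => (tl w i j : R^o)).
Proof.
apply: linf_of => x y r s; rewrite /tl.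
have := sum_combE (fun p : grid d n => (j <= p i)%N) (fun _ => 1) x y r s.
by rewrite !(eq_bigr _ (fun p _ => mul1r _)).
Qed.

Lemma sOf_lin (R : numDomainType) d n (a : 'M[R]_(d, n.+1)) : linf (sOf a).
Proof.
apply: linf_of => x y r s; apply/matrixP => i k; rewrite !mxE.
rewrite !mulr_sumr -big_split; apply: eq_bigr => j _.
have := sum_combE (fun p : grid d n => p i == j) (fun _ => 1) x y r s.
rewrite !(eq_bigr _ (fun p _ => mul1r _)) => ->. rewrite /=; ring.
Qed.

Lemma thOf_lin (R : numDomainType) d n kap (a : 'M[R]_(d, n.+1)) II c :
  linf (@thOf R d n kap a II c).
Proof.
apply: linf_of => x y r s; apply/rowP => k; rewrite !mxE.
rewrite !mulr_sumr -big_split; apply: eq_bigr => I _.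
rewrite sum_combE. rewrite /=; ring.
Qed.

Lemma sum_lin (R : numDomainType) (T : finType) : linf (fun w : {ffun T -> R^o} => (\sum_p w p : R^o)).
Proof.
apply: linf_of => x y r s.
have := sum_combE (fun _ : T => true) (fun _ => 1) x y r s.
by rewrite !(eq_bigr _ (fun p _ => mul1r _)).
Qed.

Lemma comb_le (R : numDomainType) (r1 w0 A B C D : R) : 0 < r1 ->
  A - w0 * B <= C - w0 * D -> r1 * A + - (w0 * r1) * B <= r1 * C + - (w0 * r1) * D.
Proof.
move=> Hr H.
have -> : r1 * A + - (w0 * r1) * B = r1 * (A - w0 * B) by ring.
have -> : r1 * C + - (w0 * r1) * D = r1 * (C - w0 * D) by ring.
by rewrite ler_pM2l.
Qed.
Lemma tl_sum_part (R : numDomainType) d n (w : {ffun grid d n -> R^o}) i (P : pred nat) :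
  \sum_(j < n.+1 | P j) \sum_(p : grid d n | p i == j) w p =
  \sum_(p : grid d n | P (p i)) w p.
Proof.
rewrite (partition_big (fun p : grid d n => p i) (fun j : 'I_n.+1 => P j)) //.
apply: eq_bigr => j Pj; apply: eq_bigl => p.
by case: eqP => [->|]; rewrite ?andbT ?andbF ?Pj.
Qed.

Lemma Zform (R : numFieldType) d n (a : 'M[R]_(d, n.+1))
  (aH : forall i j, (j < n)%N -> aa a i j < aa a i j.+1) (w : {ffun grid d n -> R^o}) i j :
  \sum_p w p = 1 -> (j <= n)%N -> Zmap a (sOf a w) i j = tl w i j.
Proof.
move=> Hs; case: j => [|k] Hk.
  rewrite /Zmap /= /tl -Hs; apply: eq_bigl => p //.
rewrite /Zmap /= /aa !mxE !inordK //; last by lia.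
rewrite -sumrB.
under eq_bigr => j _ do rewrite -mulrBl.
have Ha : aa a i k.+1 - aa a i k != 0.
  by rewrite subr_eq0 gt_eqF // aH.
rewrite (eq_bigr (fun j : 'I_n.+1 => if (k < j)%N then (aa a i k.+1 - aa a i k) *
          \sum_(p : grid d n | p i == j) w p else 0)); last first.
  move=> j _; case: ltnP => Hj.
    by rewrite /aa !minnE; congr (_ * _); congr (a i (inord _) - a i (inord _)); lia.
  by rewrite /aa !minnE (_ : (k.+1 - (k.+1 - j)) = j)%N ?(_ : (k - (k - j)) = j)%N ?subrr ?mul0r //; lia.
rewrite -big_mkcond /= -mulr_sumr mulrC mulrA.
rewrite /aa in Ha; rewrite mulVf // mul1r tl_sum_part /tl; done.
Qed.

Lemma tl_ge0 (R : numDomainType) d n (w : {ffun grid d n -> R^o}) i j :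
  (forall p, 0 <= w p) -> 0 <= tl w i j.
Proof. by move=> H; apply: sumr_ge0 => p _. Qed.

Lemma tl_le (R : numDomainType) d n (w : {ffun grid d n -> R^o}) i j j' :
  (forall p, 0 <= w p) -> (j <= j')%N -> tl w i j' <= tl w i j.
Proof.
move=> H Hj; rewrite /tl [X in _ <= X](bigID (fun p : grid d n => (j' <= p i)%N)) /=.
rewrite -[X in X <= _]addr0; apply: lerD; last by apply: sumr_ge0.
rewrite le_eqVlt; apply/orP; left; apply/eqP; apply: eq_bigl => p.
by case H1: (j' <= p i)%N; rewrite ?andbT ?andbF // (leq_trans Hj H1).
Qed.

Lemma tl0 (R : numDomainType) d n (w : {ffun grid d n -> R^o}) i :
  tl w i 0 = \sum_p w p.
Proof. by apply: eq_bigl. Qed.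

Lemma tl_le1 (R : numDomainType) d n (w : {ffun grid d n -> R^o}) i j :
  (forall p, 0 <= w p) -> \sum_p w p = 1 -> tl w i j <= 1.
Proof. by move=> H Hs; rewrite -Hs -(tl0 w i); apply: tl_le. Qed.

Lemma amono (R : numDomainType) d n (a : 'M[R]_(d, n.+1))
  (aH : forall i j, (j < n)%N -> aa a i j < aa a i j.+1) i j j' :
  (j <= j')%N -> (j' <= n)%N -> aa a i j <= aa a i j'.
Proof.
move=> Hj Hj'; elim: j' Hj Hj' => [|j' IH] Hj Hj'.
  by have -> : j = 0%N by lia.
case: (ltnP j j'.+1) => H.
  apply: le_trans (IH _ _) (ltW (aH _ _ _)); lia.
by have -> : j = j'.+1 by lia.
Qed.

Lemma amonoS (R : numDomainType) d n (a : 'M[R]_(d, n.+1))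
  (aH : forall i j, (j < n)%N -> aa a i j < aa a i j.+1) i j j' :
  (j < j')%N -> (j' <= n)%N -> aa a i j < aa a i j'.
Proof.
move=> Hj Hj'; apply: lt_le_trans (aH i j _) (amono aH _ _ _); lia.
Qed.

Lemma taumono d n (l : 'I_d -> nat) (tau : 'I_d -> nat -> nat)
  (tauH : forall i, tau i 0%N = 0%N /\ tau i (l i) = n /\
             forall t, (t < l i)%N -> (tau i t < tau i t.+1)%N) i t t' :
  (t <= t')%N -> (t' <= l i)%N -> (tau i t <= tau i t')%N.
Proof.
have [_ [_ H]] := tauH i.
move=> Hj Hj'; elim: t' Hj Hj' => [|j' IH] Hj Hj'.
  by have -> : t = 0%N by lia.
case: (ltnP t j'.+1) => H'.
  have := IH ltac:(lia) ltac:(lia); have := H j' ltac:(lia); lia.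
by have -> : t = j'.+1 by lia.
Qed.

Lemma taumonoS d n (l : 'I_d -> nat) (tau : 'I_d -> nat -> nat)
  (tauH : forall i, tau i 0%N = 0%N /\ tau i (l i) = n /\
             forall t, (t < l i)%N -> (tau i t < tau i t.+1)%N) i t t' :
  (t < t')%N -> (t' <= l i)%N -> (tau i t < tau i t')%N.
Proof.
have [_ [_ H]] := tauH i.
move=> Hj Hj'; have := H t ltac:(lia); have := taumono tauH (i:=i) (t:=t.+1) (t':=t') Hj Hj'. lia.
Qed.

Definition tauHyp d n (l : 'I_d -> nat) (tau : 'I_d -> nat -> nat) :=
  forall i, tau i 0%N = 0%N /\ tau i (l i) = n /\
             forall t, (t < l i)%N -> (tau i t < tau i t.+1)%N.

Lemma tauk_lt d n (l : 'I_d -> nat) (tau : 'I_d -> nat -> nat) (tauH : tauHyp n l tau)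
  (k : didx l) : (tau (tag k) (tagged k).+1 < n)%N.
Proof.
case: k => i k /=; have [_ [H _]] := tauH i.
rewrite -[X in (_ < X)%N]H; apply: (taumonoS tauH); have := ltn_ord k; lia.
Qed.

Lemma SsetP (R : numFieldType) d n kap (a : 'M[R]_(d, n.+1)) l tau II c
  (dc : R -> Prop) th w s dl
  (aH : forall i j, (j < n)%N -> aa a i j < aa a i j.+1) (tauH : tauHyp n l tau) :
  Sset (kap:=kap) (l:=l) a tau II c dc (th, w, s, dl) <->
  [/\ th = thOf a II c w, s = sOf a w, \sum_p w p = 1, (forall p, 0 <= w p) &
     ((forall k : didx l, tl w (tag k) (tau (tag k) (tagged k).+1).+1 <= dl k
                         <= tl w (tag k) (tau (tag k) (tagged k).+1))
     /\ (forall k, dc (dl k)))].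
Proof.
rewrite /Sset HQP; split.
  move=> [[Hth Hs Hw1 Hw2] [[_ H2] H3]]; split => //; split => // k.
  have := H2 k; rewrite Hs !Zform //; have := tauk_lt tauH k; lia.
move=> [Hth Hs Hw1 Hw2 [H2 H3]]; split => //; split => //; subst s; split.
  move=> i; rewrite Zform //; split; first by rewrite tl0.
  split; last by rewrite Zform // tl_ge0.
  by move=> j Hj; rewrite !Zform //; [apply: tl_le | lia].
by move=> k; rewrite !Zform //; have := tauk_lt tauH k; lia.
Qed.

Definition prodw (R : numDomainType) d n (mu : 'I_d -> 'I_n.+1 -> R) : {ffun grid d n -> R^o} :=
  [ffun p : grid d n => \prod_i mu i (p i)].

Lemma sum_prod (R : numDomainType) d n (F : 'I_d -> 'I_n.+1 -> R) :
  \sum_(p : grid d n) \prod_i F i (p i) = \prod_i \sum_j F i j.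
Proof. by rewrite bigA_distr_bigA. Qed.

Lemma marg_prod (R : numDomainType) d n (mu : 'I_d -> 'I_n.+1 -> R)
  (H1 : forall i, \sum_j mu i j = 1) i0 (P : pred 'I_n.+1) :
  \sum_(p : grid d n | P (p i0)) prodw mu p = \sum_(j | P j) mu i0 j.
Proof.
pose G i j := if i == i0 then (if P j then mu i j else 0) else mu i j.
transitivity (\sum_(p : grid d n) \prod_i G i (p i)).
  rewrite big_mkcond; apply: eq_bigr => p _; rewrite ffunE (bigD1 i0) //=.
  rewrite [RHS](bigD1 i0) //= {1}/G eqxx.
  case: (P (p i0)); last by rewrite !mul0r.
  by congr (_ * _); apply: eq_bigr => i /negbTE Hi; rewrite /G Hi.
rewrite sum_prod (bigD1 i0) //= [X in _ * X]big1 ?mulr1.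
  by rewrite [RHS]big_mkcond; apply: eq_bigr => j _; rewrite /G eqxx.
by move=> i /negbTE Hi; rewrite /G Hi; exact: H1.
Qed.

Lemma thp (R : numDomainType) d n (a : 'M[R]_(d, n.+1)) (mu : 'I_d -> 'I_n.+1 -> R)
  (H1 : forall i, \sum_j mu i j = 1) (I : {set 'I_d}) :
  \sum_(p : grid d n) (\prod_(i in I) a i (p i)) * prodw mu p =
  \prod_(i in I) \sum_j a i j * mu i j.
Proof.
pose G i j := (if i \in I then a i j else 1) * mu i j.
transitivity (\sum_(p : grid d n) \prod_i G i (p i)).
  by apply: eq_bigr => p _; rewrite ffunE big_mkcond -big_split.
rewrite sum_prod [RHS]big_mkcond; apply: eq_bigr => i _; rewrite /G.
case: (i \in I) => //.
by under eq_bigr do rewrite mul1r; exact: H1.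
Qed.

Lemma thOf_prod (R : numDomainType) d n kap (a : 'M[R]_(d, n.+1)) II c
  (mu : 'I_d -> 'I_n.+1 -> R) (H1 : forall i, \sum_j mu i j = 1) :
  @thOf R d n kap a II c (prodw mu) = theta II c (\row_i \sum_j a i j * mu i j).
Proof.
apply/rowP => k; rewrite !mxE; apply: eq_bigr => I _; rewrite thp //.
by congr (_ * _); apply: eq_bigr => i _; rewrite mxE.
Qed.

Lemma sOf_prod (R : numDomainType) d n (a : 'M[R]_(d, n.+1))
  (mu : 'I_d -> 'I_n.+1 -> R) (H1 : forall i, \sum_j mu i j = 1) i k :
  sOf a (prodw mu) i k = \sum_(j < n.+1) aa a i (minn k j) * mu i j.
Proof.
rewrite mxE; apply: eq_bigr => j _.
by rewrite (marg_prod H1 i (fun x : 'I_n.+1 => x == j)) big_pred1_eq.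
Qed.

Lemma tl_prod (R : numDomainType) d n (mu : 'I_d -> 'I_n.+1 -> R)
  (H1 : forall i, \sum_j mu i j = 1) i j :
  tl (prodw mu) i j = \sum_(j' < n.+1 | (j <= j')%N) mu i j'.
Proof. by rewrite /tl (marg_prod H1 i (fun x : 'I_n.+1 => (j <= x)%N)). Qed.

Lemma lastcol_prod (R : numDomainType) d n (a : 'M[R]_(d, n.+1))
  (mu : 'I_d -> 'I_n.+1 -> R) (H1 : forall i, \sum_j mu i j = 1) :
  lastcol (sOf a (prodw mu)) = \row_i \sum_j a i j * mu i j.
Proof.
apply/rowP => i; rewrite [LHS]mxE sOf_prod // mxE; apply: eq_bigr => j _.
rewrite /aa (_ : minn ord_max j = j) ?inord_val //.
by apply/minn_idPr; rewrite -ltnS.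
Qed.

Lemma sum_prodw (R : numDomainType) d n (mu : 'I_d -> 'I_n.+1 -> R)
  (H1 : forall i, \sum_j mu i j = 1) : \sum_p prodw mu p = 1.
Proof.
under eq_bigr do rewrite ffunE.
by rewrite sum_prod big1.
Qed.

Lemma prodw_ge0 (R : numDomainType) d n (mu : 'I_d -> 'I_n.+1 -> R)
  (H0 : forall i j, 0 <= mu i j) p : 0 <= prodw mu p.
Proof. by rewrite ffunE; apply: prodr_ge0. Qed.

Definition mu2 (R : numDomainType) n (c1 c2 : nat) (al be : R) : 'I_n.+1 -> R :=
  fun j => (if (j : nat) == c1 then al else 0) + (if (j : nat) == c2 then be else 0).

Lemma sum_pt (R : numDomainType) n c (x : R) (F : nat -> R) : (c <= n)%N ->
  \sum_(j < n.+1) (if (j : nat) == c then x else 0) * F j = x * F c.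
Proof.
move=> Hc; have Hc' : (c < n.+1)%N by [].
rewrite (bigD1 (Ordinal Hc')) //= eqxx big1 ?addr0 //.
move=> j Hj; case: eqP => [Hjc|]; last by rewrite mul0r.
by exfalso; move/eqP: Hj; apply; apply: val_inj.
Qed.

Lemma sum_mu2 (R : numDomainType) n c1 c2 (al be : R) (F : nat -> R) :
  (c1 <= n)%N -> (c2 <= n)%N ->
  \sum_(j < n.+1) mu2 c1 c2 al be j * F j = al * F c1 + be * F c2.
Proof.
move=> H1 H2; under eq_bigr do rewrite mulrDl.
by rewrite big_split /= !sum_pt.
Qed.

Lemma sum_mu2P (R : numDomainType) n c1 c2 (al be : R) (P : pred nat) :
  (c1 <= n)%N -> (c2 <= n)%N ->
  \sum_(j < n.+1 | P j) mu2 c1 c2 al be j =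
    al * (if P c1 then 1 else 0) + be * (if P c2 then 1 else 0).
Proof.
move=> H1 H2; rewrite big_mkcond /= -(@sum_mu2 R n c1 c2 al be (fun j => if P j then 1 else 0)) //.
by apply: eq_bigr => j _; case: (P j); rewrite ?mulr1 ?mulr0.
Qed.

Lemma aaE (R : numDomainType) d n (a : 'M[R]_(d, n.+1)) i (j : 'I_n.+1) : aa a i j = a i j.
Proof. by rewrite /aa inord_val. Qed.

Definition dlt (R : numDomainType) d (l : 'I_d -> nat) (t : 'I_d -> nat) : {ffun didx l -> R^o} :=
  [ffun k : didx l => if ((tagged k).+1 < t (tag k))%N then 1 else 0].

Definition alf (R : numFieldType) d n (a : 'M[R]_(d, n.+1)) i (c1 c2 : nat) (g : R) :=
  (aa a i c2 - g) / (aa a i c2 - aa a i c1).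
Definition bet (R : numFieldType) d n (a : 'M[R]_(d, n.+1)) i (c1 c2 : nat) (g : R) :=
  (g - aa a i c1) / (aa a i c2 - aa a i c1).

Lemma albe (R : numFieldType) d n (a : 'M[R]_(d, n.+1)) i c1 c2 g :
  aa a i c1 < aa a i c2 -> aa a i c1 <= g <= aa a i c2 ->
  [/\ 0 <= alf a i c1 c2 g, 0 <= bet a i c1 c2 g, alf a i c1 c2 g + bet a i c1 c2 g = 1
   & alf a i c1 c2 g * aa a i c1 + bet a i c1 c2 g * aa a i c2 = g].
Proof.
move=> Hlt /andP[H1 H2]; rewrite /alf /bet.
have Hp : 0 < aa a i c2 - aa a i c1 by rewrite subr_gt0.
have Hn : aa a i c2 - aa a i c1 != 0 by rewrite gt_eqF.
split.
- by apply: divr_ge0; rewrite ?subr_ge0 // ltW.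
- by apply: divr_ge0; rewrite ?subr_ge0 // ltW.
- by rewrite -mulrDl (_ : _ - g + _ = aa a i c2 - aa a i c1) ?divff //; ring.
- by field.
Qed.

Definition mug (R : numFieldType) d n (a : 'M[R]_(d, n.+1)) (c1 c2 : 'I_d -> nat) (g : 'I_d -> R)
  : 'I_d -> 'I_n.+1 -> R :=
  fun i => mu2 (c1 i) (c2 i) (alf a i (c1 i) (c2 i) (g i)) (bet a i (c1 i) (c2 i) (g i)).

Lemma TP (R : numFieldType) d n (a : 'M[R]_(d, n.+1)) (l : 'I_d -> nat) tau
  (aH : forall i j, (j < n)%N -> aa a i j < aa a i j.+1) (tauH : tauHyp n l tau)
  (t : 'I_d -> nat) (Ht : forall i, (0 < t i <= l i)%N) (c1 c2 : 'I_d -> nat) (g : 'I_d -> R)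
  (Hc : forall i, (tau i (t i).-1 <= c1 i)%N /\ (c1 i < c2 i)%N /\ (c2 i <= tau i (t i))%N)
  (Hg : forall i, aa a i (c1 i) <= g i <= aa a i (c2 i)) :
  let mu := mug a c1 c2 g in
  [/\ forall i, \sum_j mu i j = 1, forall i j, 0 <= mu i j,
      (\row_i \sum_j a i j * mu i j) = \row_i g i &
      forall k : didx l, tl (prodw mu) (tag k) (tau (tag k) (tagged k).+1).+1 <= @dlt R d l t k
                         <= tl (prodw mu) (tag k) (tau (tag k) (tagged k).+1)].
Proof.
move=> mu.
have Hn : forall i, (c2 i <= n)%N.
  move=> i; have [_ [H _]] := tauH i; rewrite -H.
  have [_ [_ H3]] := Hc i; apply: leq_trans H3 _; apply: (taumono tauH) => //; by have := Ht i; lia.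
have Hab : forall i, [/\ 0 <= alf a i (c1 i) (c2 i) (g i), 0 <= bet a i (c1 i) (c2 i) (g i),
     alf a i (c1 i) (c2 i) (g i) + bet a i (c1 i) (c2 i) (g i) = 1
   & alf a i (c1 i) (c2 i) (g i) * aa a i (c1 i) + bet a i (c1 i) (c2 i) (g i) * aa a i (c2 i) = g i].
  move=> i; apply: albe => //; apply: amonoS => //; by have := Hc i; lia.
have Hn1 : forall i, (c1 i <= n)%N by move=> i; have := Hn i; have := Hc i; lia.
have H1 : forall i, \sum_j mu i j = 1.
  move=> i; have := @sum_mu2 R n (c1 i) (c2 i) (alf a i (c1 i) (c2 i) (g i))
     (bet a i (c1 i) (c2 i) (g i)) (fun _ => 1) (Hn1 i) (Hn i).
  have [_ _ Hs _] := Hab i; rewrite !mulr1 Hs => <-; apply: eq_bigr => j _; by rewrite mulr1.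
split => //.
- move=> i j; rewrite /mu /mug /mu2; have [? ? _ _] := Hab i.
  by apply: addr_ge0; case: ifP.
- apply/rowP => i; rewrite !mxE.
  under eq_bigr do rewrite -aaE mulrC.
  rewrite /mu /mug sum_mu2 //; by have [_ _ _ ->] := Hab i.
move=> [i k] /=; rewrite !tl_prod // /mu /mug !sum_mu2P // ffunE /=.
have [Ha Hb Hs _] := Hab i.
have Hk : ((k.+1) < l i)%N by have := ltn_ord k; lia.
have [Hc1 [Hc12 Hc2]] := Hc i; have Hti := Ht i.
case: (ltnP k.+1 (t i)) => Htk.
- have Hle : (tau i k.+1 <= tau i (t i).-1)%N by apply: (taumono tauH); lia.
  have -> : (tau i k.+1 <= c1 i)%N by lia.
  have -> : (tau i k.+1 <= c2 i)%N by lia.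
  rewrite !mulr1 Hs lexx andbT.
  by rewrite -[X in _ <= X]Hs; apply: lerD; case: ifP => _; rewrite ?mulr1 ?mulr0.
- have Hle : (tau i (t i) <= tau i k.+1)%N by apply: (taumono tauH); lia.
  have -> : (tau i k.+1 < c1 i)%N = false by apply/negbTE; rewrite -leqNgt; lia.
  have -> : (tau i k.+1 < c2 i)%N = false by apply/negbTE; rewrite -leqNgt; lia.
  rewrite !mulr0 addr0 lexx /=.
  by apply: addr_ge0; case: ifP; rewrite ?mulr1 ?mulr0.
Qed.

Lemma tl_diff (R : numDomainType) d n (w : {ffun grid d n -> R^o}) i j :
  tl w i j - tl w i j.+1 = \sum_(p : grid d n | p i == j :> nat) w p.
Proof.
rewrite /tl (bigID (fun p : grid d n => (j.+1 <= p i)%N)) /=.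
rewrite (eq_bigl (fun p : grid d n => (j.+1 <= p i)%N)); last first.
  by move=> p; case H1: (j.+1 <= p i)%N; rewrite ?andbT ?andbF // ltnW.
rewrite addrC addrK; apply: eq_bigl => p.
by rewrite -leqNgt eqn_leq andbC.
Qed.

Lemma le_sum1 (R : numDomainType) (T : finType) (w : T -> R) (P : pred T) p0 :
  (forall p, 0 <= w p) -> P p0 -> w p0 <= \sum_(p | P p) w p.
Proof.
by move=> H Hp; rewrite (bigD1 p0) //= lerDl; apply: sumr_ge0.
Qed.

Definition eP (R : numDomainType) d n (p0 : grid d n) : {ffun grid d n -> R^o} :=
  [ffun p => if p == p0 then 1 else 0].

Lemma sum_eP (R : numDomainType) d n (p0 : grid d n) (P : pred (grid d n)) :
  \sum_(p | P p) @eP R d n p0 p = if P p0 then 1 else 0.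
Proof.
rewrite big_mkcond (bigD1 p0) //= ffunE eqxx big1 ?addr0; first by case: (P p0).
by move=> p /negbTE Hp; rewrite ffunE Hp; case: (P p).
Qed.

Lemma tl_eP (R : numDomainType) d n (p0 : grid d n) i j :
  tl (@eP R d n p0) i j = if (j <= p0 i)%N then 1 else 0.
Proof. by rewrite /tl sum_eP. Qed.

Lemma Srel_of (R : numFieldType) d n kap (a : 'M[R]_(d, n.+1)) l tau II c th w s (dl : {ffun didx l -> R^o})
  (aH : forall i j, (j < n)%N -> aa a i j < aa a i j.+1) (tauH : tauHyp n l tau) :
  th = thOf a II c w -> s = sOf a w -> \sum_p w p = 1 -> (forall p, 0 <= w p) ->
  (forall k : didx l, tl w (tag k) (tau (tag k) (tagged k).+1).+1 <= dl k
                         <= tl w (tag k) (tau (tag k) (tagged k).+1)) ->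
  Sset (kap:=kap) (l:=l) a tau II c (@rel01 R) (th, w, s, dl).
Proof.
move=> H1 H2 H3 H4 H5; apply/(SsetP II c (@rel01 R) th w s dl aH tauH).
split => //; split => // k; have /andP[Hl Hu] := H5 k; rewrite /rel01.
apply/andP; split.
  by apply: le_trans Hl; apply: tl_ge0.
by apply: le_trans Hu _; apply: tl_le1.
Qed.

Lemma comb_back (R : numFieldType) (V : lmodType R) (P Q : V) (w0 : R) :
  1 - w0 != 0 ->
  w0 *: Q + (1 - w0) *: ((1 - w0)^-1 *: P + (- (w0 / (1 - w0))) *: Q) = P.
Proof.
move=> H; rewrite scalerDr !scalerA mulfV // scale1r mulrN mulrCA mulfV // mulr1.
by rewrite scaleNr addrCA subrr addr0.
Qed.

Lemma extreme_bin (R : realFieldType) d n kap (a : 'M[R]_(d, n.+1)) l tau II c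
  (aH : forall i j, (j < n)%N -> aa a i j < aa a i j.+1) (tauH : tauHyp n l tau)
  (P : PT R d n kap l) :
  extreme_point (Sset a tau II c (@rel01 R)) P -> delta_binary P.
Proof.
case: P => [[[th w] s] dl] [HS Hext].
have SP := fun th w s dl => SsetP II c (@rel01 R) th w s dl aH tauH.
have [Hth Hs Hw1 Hw0 [Htl Hrel]] := (SP _ _ _ _).1 HS.
move=> k0 /=; rewrite /bin01.
case: (eqVneq (dl k0) 0) => [->|H0]; first by left.
case: (eqVneq (dl k0) 1) => [->|H1]; first by right.
exfalso.
case: (boolP [exists p, (0 < w p) && (w p < 1)]).
-
  move=> /existsP [p0 /andP [Hp0 Hp1]].
  set w0 := w p0.
  pose x (k : didx l) : R :=
    let i := tag k in let ta := tau i (tagged k).+1 in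
    if (ta < p0 i)%N then 1 else if (p0 i < ta)%N then 0
    else Num.max 0 (1 - (tl w i ta - dl k) / w0).
  pose dQ : {ffun didx l -> R^o} := [ffun k => x k].
  pose Q : PT R d n kap l := (thOf a II c (eP R p0), eP R p0, sOf a (eP R p0), dQ).
  have Hw0' : 1 - w0 != 0 by rewrite subr_eq0 eq_sym lt_eqF.
  pose Rr : PT R d n kap l := ((1 - w0)^-1 *: (th, w, s, dl) + (- (w0 / (1 - w0))) *: Q).
  have Hx : forall k : didx l, tl (eP R p0) (tag k) (tau (tag k) (tagged k).+1).+1 <= dQ k
                         <= tl (eP R p0) (tag k) (tau (tag k) (tagged k).+1) /\
      tl w (tag k) (tau (tag k) (tagged k).+1).+1 - w0 * tl (eP R p0) (tag k) (tau (tag k) (tagged k).+1).+1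
        <= dl k - w0 * dQ k <=
      tl w (tag k) (tau (tag k) (tagged k).+1) - w0 * tl (eP R p0) (tag k) (tau (tag k) (tagged k).+1).
    move=> [i k]; rewrite /= !tl_eP ffunE /x /=.
    set ta := tau i k.+1.
    have /andP [Hl Hu] := Htl (Tagged _ k); rewrite /= -/ta in Hl Hu.
    case: (ltngtP ta (p0 i)) => Hc.
    + rewrite lexx /= !mulr1; split => //; apply/andP; split; apply: lerB => //; first [exact: Hl | exact: Hu].
    + rewrite lexx /= !mulr0 !subr0; split => //; apply/andP; split; first [exact: Hl | exact: Hu].
    + set D := dl (existT _ i k).
      have Hl' : tl w i ta.+1 <= D := Hl.
      have Hu' : D <= tl w i ta := Hu.
      have Hw0p : 0 < w0 by [].
      have Hdiff : w0 <= tl w i ta - tl w i ta.+1.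
        rewrite tl_diff; apply: le_sum1 => //; by rewrite Hc.
      set L := 1 - (tl w i ta - D) / w0.
      have HL : L <= 1.
        by rewrite /L lerBlDr lerDl; apply: divr_ge0; rewrite ?subr_ge0 // ltW.
      have Hm : w0 * L = w0 - (tl w i ta - D).
        by rewrite /L mulrBr mulr1 mulrCA divff ?gt_eqF // mulr1.
      rewrite mulr0 subr0 mulr1.
      case: (lerP 0 L) => HL0.
      * rewrite HL0 HL /=; split => //; rewrite Hm; apply/andP; split; lra.
      * rewrite lexx ler01 /= mulr0 subr0; split => //.
        apply/andP; split => //.
        have : w0 * L < 0 by rewrite pmulr_rlt0.
        rewrite Hm; lra.
  have HQ : Sset a tau II c (@rel01 R) Q.
    apply: Srel_of => //; first by rewrite sum_eP.
      by move=> p; rewrite ffunE; case: ifP.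
    by move=> k; have [] := Hx k.
  have HR : Sset a tau II c (@rel01 R) Rr.
    rewrite /Rr /Q /=.
    have Hr : (1 - w0)^-1 + - (w0 / (1 - w0)) = 1.
      by rewrite -mulNr -[X in X + _]mul1r -mulrDl divff.
    have Hr1 : 0 < (1 - w0)^-1 by rewrite invr_gt0 subr_gt0.
    apply: Srel_of => //.
    + by rewrite Hth (linf_comb _ _ _ _ (thOf_lin a II c)).
    + by rewrite Hs (linf_comb _ _ _ _ (sOf_lin a)).
    + rewrite (linf_comb _ _ _ _ (sum_lin R (grid d n))) Hw1 sum_eP /= !scaleRE !mulr1.
      exact: Hr.
    + move=> p; rewrite !ffunE /= !scaleRE; case: eqP => [->|_].
        by rewrite mulr1 mulrC -/w0 subrr.
      by rewrite mulr0 addr0; apply: mulr_ge0; [apply: ltW | apply: Hw0].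
    + move=> k; rewrite !(linf_comb _ _ _ _ (tl_lin R n _ _)) !ffunE /= !scaleRE.
      have [_ /andP [H1' H2']] := Hx k.
      by rewrite ffunE in H1' H2'; apply/andP; split; apply: comb_le.
  have := Hext _ _ w0 HQ HR; rewrite Hp0 Hp1 => /(_ isT).
  rewrite /Rr comb_back // => /(_ erefl) HQR.
  have := congr1 (fun q : PT R d n kap l => q.1.1.2 p0) HQR.
  rewrite /= !ffunE /= eqxx !scaleRE mulr1 mulrC -/w0 subrr.
  by move/eqP; rewrite oner_eq0.
-
  move=> Hno.
  have [p0 Hp0] : exists p0, w p0 != 0.
    case: (boolP [exists p, w p != 0]) => [/existsP //|/existsPn Hz].
    exfalso; move: Hw1; rewrite big1 => [/eqP|p _]; first by rewrite eq_sym oner_eq0.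
    by have := Hz p; rewrite negbK => /eqP.
  have Hp0' : 0 < w p0 by rewrite lt_def Hp0 Hw0.
  have Hp1 : w p0 = 1.
    apply/le_anti/andP; split.
      by rewrite -Hw1; apply: (le_sum1 (P := xpredT)).
    move/existsPn: Hno => /(_ p0); rewrite Hp0' /= -leNgt; done.
  have Hwe : w = eP R p0.
    have Hrest : \sum_(p | p != p0) w p = 0.
      move: Hw1; rewrite (bigD1 p0) //= Hp1 => H; apply: (addrI 1); by rewrite addr0.
    apply/ffunP => p; rewrite ffunE; case: eqP => [->//|/eqP Hne].
    exact: (psumr_eq0P (fun p _ => Hw0 p) Hrest).
  subst w.
  set i0 := tag k0; set ta := tau i0 (tagged k0).+1.
  have := Htl k0; rewrite !tl_eP -/i0 -/ta.
  case: (ltngtP ta (p0 i0)) => Hc.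
  + by move=> /andP [Ha Hb]; move/eqP: H1; apply; apply/le_anti; rewrite Ha Hb.
  + by move=> /andP [Ha Hb]; move/eqP: H0; apply; apply/le_anti; rewrite Ha Hb.
  + move=> /andP [Ha Hb].
    pose dv (v : R) : {ffun didx l -> R^o} := [ffun k => if k == k0 then v else dl k].
    have Hdv : forall v, 0 <= v <= 1 -> Sset a tau II c (@rel01 R) (th, eP R p0, s, dv v).
      move=> v Hv; apply: Srel_of => // k; rewrite ffunE; case: eqP => [->|_]; last exact: Htl.
      by rewrite !tl_eP -/i0 -/ta Hc ltnn leqnn.
    have Hlt : 0 < dl k0 < 1 by rewrite !lt_def H0 Ha Hb eq_sym H1.
    have := Hext _ _ (dl k0) (Hdv 1 ltac:(by rewrite ler01 lexx)) (Hdv 0 ltac:(by rewrite lexx ler01)) Hlt.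
    have E : forall (V : lmodType R) (x : V), dl k0 *: x + (1 - dl k0) *: x = x.
      by move=> V x; rewrite -scalerDl addrC subrK scale1r.
    have Edl : dl = dl k0 *: dv 1 + (1 - dl k0) *: dv 0.
      apply/ffunP => k; rewrite !ffunE /= !scaleRE; case: eqP => [->|_].
        by rewrite mulr1 mulr0 addr0.
      by rewrite -mulrDl addrC subrK mul1r.
    have Eq : (th, eP R p0, s, dl) =
      (dl k0 *: th + (1 - dl k0) *: th, dl k0 *: eP R p0 + (1 - dl k0) *: eP R p0,
       dl k0 *: s + (1 - dl k0) *: s, dl k0 *: dv 1 + (1 - dl k0) *: dv 0).
      by rewrite !E -Edl.
    move=> /(_ Eq) /(congr1 (fun q : PT R d n kap l => q.2 k0)).
    by rewrite /= !ffunE eqxx => /eqP; rewrite oner_eq0.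
Qed.

Lemma reidx (R : nmodType) (T : finType) (F : T -> R) :
  \sum_(j < #|T|) F (enum_val j) = \sum_x F x.
Proof.
rewrite -(big_enum_val (A := T)); apply: eq_bigl => x; by rewrite inE.
Qed.

Lemma pair_sum (R : numDomainType) (U V : lmodType R) k (F : 'I_k -> U * V) :
  \sum_(j < k) F j = (\sum_(j < k) (F j).1, \sum_(j < k) (F j).2).
Proof.
rewrite -(@big_morph U (U * V)%type fst 0 +%R 0 +%R (fun x y => erefl) erefl).
rewrite -(@big_morph V (U * V)%type snd 0 +%R 0 +%R (fun x y => erefl) erefl).
by case: (\sum_(j < k) F j).
Qed.

Lemma pair_sumT (R : numDomainType) (U V : lmodType R) (T : finType) (F : T -> U * V) :
  \sum_j F j = (\sum_j (F j).1, \sum_j (F j).2).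
Proof.
rewrite -(@big_morph U (U * V)%type fst 0 +%R 0 +%R (fun x y => erefl) erefl).
rewrite -(@big_morph V (U * V)%type snd 0 +%R 0 +%R (fun x y => erefl) erefl).
by case: (\sum_j F j).
Qed.

Lemma marg_part (R : numDomainType) d n (w : {ffun grid d n -> R^o}) i (F : 'I_n.+1 -> R) :
  \sum_(j < n.+1) F j * \sum_(p : grid d n | p i == j) w p = \sum_(p : grid d n) F (p i) * w p.
Proof.
rewrite [RHS](partition_big (fun p : grid d n => p i) xpredT) //.
apply: eq_bigr => j _; rewrite mulr_sumr; apply: eq_bigr => p /eqP ->; done.
Qed.

Definition gp (R : numDomainType) d n (a : 'M[R]_(d, n.+1)) (q : grid d n) : 'rV[R]_d :=
  \row_i a i (q i).

Lemma proj_sum (R : numDomainType) d n kap (a : 'M[R]_(d, n.+1)) II c (w : {ffun grid d n -> R^o}) :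
  (lastcol (sOf a w), @thOf R d n kap a II c w) =
  \sum_q w q *: (gp a q, theta II c (gp a q)).
Proof.
rewrite pair_sumT /=; congr (_, _).
  apply/rowP => i; rewrite !mxE summxE.
  rewrite (marg_part w i (fun j : 'I_n.+1 => aa a i (minn ord_max j))).
  apply: eq_bigr => q _; rewrite !mxE mulrC; congr (_ * _).
  rewrite /aa (_ : minn ord_max (q i) = q i) ?inord_val //.
  by apply/minn_idPr; rewrite -ltnS.
apply/rowP => k; rewrite !mxE summxE.
under [RHS]eq_bigr do rewrite !mxE mulr_sumr.
rewrite exchange_big /=; apply: eq_bigr => I _.
rewrite mulr_sumr; apply: eq_bigr => q _.
have -> : \prod_(i in I) gp a q 0 i = \prod_(i in I) a i (q i).
  by apply: eq_bigr => i _; rewrite mxE.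
ring.
Qed.

Lemma supp_lo (R : realDomainType) d n (w : {ffun grid d n -> R^o}) i j p :
  (forall p, 0 <= w p) -> \sum_p w p = 1 -> 1 <= tl w i j -> w p != 0 -> (j <= p i)%N.
Proof.
move=> H0 H1 Ht Hp; apply/negPn/negP => Hn.
have Hz : \sum_(q : grid d n | ~~ (j <= q i)%N) w q = 0.
  apply/le_anti/andP; split; last by apply: sumr_ge0.
  move: H1; rewrite (bigID (fun q : grid d n => (j <= q i)%N)) /= => H1.
  have : tl w i j + \sum_(q : grid d n | ~~ (j <= q i)%N) w q = 1 by rewrite -H1.
  move: Ht; rewrite /tl; lra.
by move/eqP: Hp; apply; apply: (psumr_eq0P (fun q _ => H0 q) Hz).
Qed.

Lemma supp_hi (R : numDomainType) d n (w : {ffun grid d n -> R^o}) i j p :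
  (forall p, 0 <= w p) -> tl w i j <= 0 -> w p != 0 -> (p i < j)%N.
Proof.
move=> H0 Ht Hp; rewrite ltnNge; apply/negP => Hn.
have Hz : tl w i j = 0 by apply/le_anti; rewrite Ht tl_ge0.
by move/eqP: Hp; apply; apply: (psumr_eq0P (fun q _ => H0 q) Hz).
Qed.

Lemma projS_target (R : realFieldType) d n kap (a : 'M[R]_(d, n.+1)) l tau II c
  (n0 : (0 < n)%N)
  (aH : forall i j, (j < n)%N -> aa a i j < aa a i j.+1) (tauH : tauHyp n l tau)
  (P : PT R d n kap l) :
  Sset a tau II c (@bin01 R) P -> target a l tau II c (proj_fth P).
Proof.
case: P => [[[th w] s] dl] HS.
have [Hth Hs Hw1 Hw0 [Htl Hbin]] := (SsetP II c (@bin01 R) th w s dl aH tauH).1 HS.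
have Hl0 : forall i, (0 < l i)%N.
  move=> i; have [H1 [H2 _]] := tauH i; rewrite lt0n; apply/eqP => E.
  by move: H2; rewrite E H1 => E'; move: n0; rewrite -E'.
pose Pt i := fun t : nat => (0 < t)%N &&
  ((t == l i) || [exists k : 'I_(l i).-1, (k.+1 == t) && (dl (Tagged (fun i => 'I_(l i).-1) k) == 0)]).
have exP : forall i, exists t, Pt i t.
  by move=> i; exists (l i); rewrite /Pt Hl0 eqxx.
pose T i := ex_minn (exP i).
have HT : forall i, [/\ Pt i (T i), (T i <= l i)%N & forall t, Pt i t -> (T i <= t)%N].
  move=> i; rewrite /T; case: ex_minnP => m Hm Hmin; split => //.
  by apply: Hmin; rewrite /Pt Hl0 eqxx.
have Hsupp : forall p, w p != 0 -> forall i,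
    (tau i (T i).-1 <= p i)%N /\ (p i <= tau i (T i))%N.
  move=> p Hp i; have [HP Hle Hmin] := HT i.
  move: HP => /andP [HT0 /orP HT1]; split.
  - case E: (T i) => [|t]; first by rewrite E in HT0.
    case: t E => [|t] E; first by have [-> _] := tauH i.
    have Ht : (t < (l i).-1)%N by move: Hle; rewrite E; lia.
    have Hd := Hbin (Tagged (fun i => 'I_(l i).-1) (Ordinal Ht)).
    case: Hd => Hd.
      have : Pt i t.+1.
        rewrite /Pt /=; apply/orP; right; apply/existsP; exists (Ordinal Ht).
        by rewrite eqxx Hd eqxx.
      by move/Hmin; rewrite E ltnn.
    have := Htl (Tagged (fun i => 'I_(l i).-1) (Ordinal Ht)); rewrite /= Hd => /andP [_ H].
    exact: (supp_lo Hw0 Hw1 H Hp).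
  - case: HT1 => [/eqP ->|/existsP [k /andP [/eqP Ek /eqP Hd]]].
      have [_ [-> _]] := tauH i; by rewrite -ltnS.
    have := Htl (Tagged (fun i => 'I_(l i).-1) k); rewrite /= Hd => /andP [H _].
    by have := supp_hi Hw0 H Hp; rewrite Ek ltnS.
have [p1 Hp1] : exists p1, w p1 != 0.
  case: (boolP [exists p, w p != 0]) => [/existsP //|/existsPn Hz].
  exfalso; move: Hw1; rewrite big1 => [/eqP|p _]; first by rewrite eq_sym oner_eq0.
  by have := Hz p; rewrite negbK => /eqP.
have Hbox : forall p, w p != 0 -> box a tau T (gp a p).
  move=> p Hp i; rewrite mxE -aaE; have [H1 H2] := Hsupp p Hp i.
  have [_ Hle _] := HT i.
  have Hn : (tau i (T i) <= n)%N by have [_ [<- _]] := tauH i; apply: (taumono tauH).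
  by rewrite !(amono aH) //; apply: leq_trans H2 Hn.
exists T; split.
  by move=> i; have [/andP [-> _] -> _] := HT i.
pose pt q := (gp a q, theta II c (gp a q)).
exists #|grid d n|, (fun j => w (enum_val j)),
  (fun j => if w (enum_val j) == 0 then pt p1 else pt (enum_val j)).
split; first by move=> j; apply: Hw0.
split; first by rewrite (reidx (fun q => w q)).
split.
  move=> j; case: eqP => [_|/eqP Hj].
    by exists (gp a p1); split => //; apply: Hbox.
  by exists (gp a (enum_val j)); split => //; apply: Hbox.
rewrite /proj_fth Hth Hs proj_sum -(reidx (fun q => w q *: pt q)).
apply: eq_bigr => j _; case: eqP => [->|//]; by rewrite !scale0r.
Qed.

Lemma lastcol_lin (R : numDomainType) d n : linf (@lastcol R d n).
Proof. by apply: linf_of => x y r s; apply/rowP => i; rewrite !mxE. Qed.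

Lemma mix_tl (R : realFieldType) d n k (lam : 'I_k -> R) (W : 'I_k -> {ffun grid d n -> R^o})
  i j1 j2 (v : R) :
  (forall j, 0 <= lam j) -> \sum_j lam j = 1 ->
  (forall j, tl (W j) i j1 <= v <= tl (W j) i j2) ->
  tl (\sum_j lam j *: W j) i j1 <= v <= tl (\sum_j lam j *: W j) i j2.
Proof.
move=> H0 H1 H.
rewrite !(linf_sum _ _ (tl_lin R n i _)).
have Ev : v = \sum_j lam j * v by rewrite -mulr_suml H1 mul1r.
apply/andP; split.
  rewrite [X in _ <= X]Ev; apply: ler_sum => j _; rewrite scaleRE.
  by apply: ler_wpM2l => //; have /andP [] := H j.
rewrite [X in X <= _]Ev; apply: ler_sum => j _; rewrite scaleRE.
by apply: ler_wpM2l => //; have /andP [] := H j.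
Qed.

Lemma target_projS (R : realFieldType) d n kap (a : 'M[R]_(d, n.+1)) l tau II c
  (aH : forall i j, (j < n)%N -> aa a i j < aa a i j.+1) (tauH : tauHyp n l tau) y :
  target a l tau II c y ->
  exists P : PT R d n kap l, Sset a tau II c (@bin01 R) P /\ proj_fth P = y.
Proof.
move=> [t [Ht [k [lam [pts [Hl0 [Hl1 [HA ->]]]]]]]].
pose g j := (pts j).1.
have Hpts : forall j, pts j = (g j, theta II c (g j)) /\ box a tau t (g j).
  by move=> j; have [g0 [Hb E]] := HA j; rewrite /g E /=.
pose c1 i := tau i (t i).-1.
pose c2 i := tau i (t i).
have Hc : forall i, (tau i (t i).-1 <= c1 i)%N /\ (c1 i < c2 i)%N /\ (c2 i <= tau i (t i))%N.
  move=> i; split => //; split => //; apply: (taumonoS tauH); have := Ht i; lia.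
pose mu j := mug a c1 c2 (fun i => g j 0 i).
have TPj : forall j, _ := fun j => TP aH tauH Ht Hc (g := fun i => g j 0 i)
   (fun i => (proj2 (Hpts j)) i).
pose w := \sum_j lam j *: prodw (mu j).
exists (thOf a II c w, w, sOf a w, @dlt R d l t).
split.
  apply/(SsetP II c (@bin01 R) _ w _ _ aH tauH); split => //.
  - rewrite (linf_sum _ _ (sum_lin R (grid d n))).
    rewrite -[RHS]Hl1; apply: eq_bigr => j _.
    by have [H1 _ _ _] := TPj j; rewrite sum_prodw // scaleRE mulr1.
  - move=> p; rewrite sum_ffunE; apply: sumr_ge0 => j _; rewrite ffunE scaleRE.
    apply: mulr_ge0 => //; apply: prodw_ge0; by have [_ H0 _ _] := TPj j.
  split.
    move=> kk; apply: mix_tl => // j; by have [_ _ _ H] := TPj j.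
  by move=> kk; rewrite ffunE /bin01; case: ifP; [right|left].
rewrite /proj_fth pair_sum /=; congr (_, _).
  rewrite (linf_sum _ _ (sOf_lin a)) (linf_sum _ _ (lastcol_lin R d n)).
  apply: eq_bigr => j _; have [H1 _ H3 _] := TPj j; congr (_ *: _).
  rewrite lastcol_prod // H3 (proj1 (Hpts j)) /=.
  by apply/rowP => i; rewrite mxE.
rewrite (linf_sum _ _ (thOf_lin a II c)).
apply: eq_bigr => j _; have [H1 _ H3 _] := TPj j; congr (_ *: _).
rewrite thOf_prod // H3 (proj1 (Hpts j)) /=; congr (theta II c _).
by apply/rowP => i; rewrite mxE.
Qed.

Lemma aa0 (R : numDomainType) d n (a : 'M[R]_(d, n.+1)) i : aa a i 0 = a i ord0.
Proof. by rewrite /aa; congr (a i _); apply: val_inj; rewrite /= inordK. Qed.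

Lemma aan (R : numDomainType) d n (a : 'M[R]_(d, n.+1)) i : aa a i n = a i ord_max.
Proof. by rewrite /aa; congr (a i _); apply: val_inj; rewrite /= inordK. Qed.

Lemma graph_projM (R : realFieldType) m d n kap (a : 'M[R]_(d, n.+1)) l tau II c
  (X : 'rV[R]_m -> Prop) (f : 'rV[R]_m -> 'rV[R]_d)
  (u : 'rV[R]_m -> 'M[R]_(d, n.+1)) (W : 'rV[R]_m * 'rV[R]_d -> Prop)
  (n0 : (0 < n)%N)
  (aH : forall i j, (j < n)%N -> aa a i j < aa a i j.+1) (tauH : tauHyp n l tau)
  (Hf : forall x, X x -> forall i, a i ord0 <= f x 0 i <= a i ord_max)
  (Hu : forall x, X x -> forall i,
     u x i ord0 = a i ord0 /\ u x i ord_max = f x 0 i /\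
     forall j : 'I_n.+1, (0 < j < n)%N -> u x i j <= Num.min (f x 0 i) (a i j))
  (HWf : forall x, X x -> W (x, f x)) y :
  graph_thf II c X f y ->
  exists q, Mset (kap:=kap) (l:=l) a tau II c X u W (@bin01 R) q /\ proj_xth q = y.
Proof.
case: y => x th0 [/= HX ->].
have exK : forall i, exists k, f x 0 i <= aa a i k.+1.
  move=> i; exists n.-1; rewrite prednK // aan; by have /andP [] := Hf x HX i.
pose kk i := ex_minn (exK i).
have Hkk : forall i, [/\ (kk i < n)%N, aa a i (kk i) <= f x 0 i & f x 0 i <= aa a i (kk i).+1].
  move=> i; rewrite /kk; case: ex_minnP => k Hk Hmin; split => //.
  - have := Hmin n.-1; rewrite prednK // aan; have /andP [_ H] := Hf x HX i.
    by move=> /(_ H); lia.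
  - case: k Hk Hmin => [|k] Hk Hmin; first by rewrite aa0; have /andP [] := Hf x HX i.
    case: (lerP (f x 0 i) (aa a i k.+1)) => H; last exact: ltW.
    by have := Hmin k H; rewrite ltnn.
have exT : forall i, exists t, (kk i < tau i t)%N.
  move=> i; exists (l i); have [_ [-> _]] := tauH i; by have [] := Hkk i.
pose t i := ex_minn (exT i).
have Htt : forall i, [/\ (kk i < tau i (t i))%N, (0 < t i <= l i)%N & (tau i (t i).-1 <= kk i)%N].
  move=> i; rewrite /t; case: ex_minnP => t0 Ht0 Hmin.
  have Hl : (t0 <= l i)%N by apply: Hmin; have [_ [-> _]] := tauH i; have [] := Hkk i.
  have Hpos : (0 < t0)%N by case: t0 Ht0 {Hmin Hl} => [|//]; have [-> _] := tauH i.
  split => //; first by rewrite Hpos Hl.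
  rewrite leqNgt; apply/negP => H; have := Hmin _ H; lia.
have Ht : forall i, (0 < t i <= l i)%N by move=> i; have [] := Htt i.
have Hc : forall i, (tau i (t i).-1 <= kk i)%N /\ (kk i < (kk i).+1)%N /\ ((kk i).+1 <= tau i (t i))%N.
  by move=> i; have [? ? ?] := Htt i.
have Hg : forall i, aa a i (kk i) <= f x 0 i <= aa a i (kk i).+1.
  by move=> i; have [_ -> ->] := Hkk i.
have [H1 H0 H3 H4] := TP aH tauH Ht Hc Hg.
pose mu := mug a kk (fun i => (kk i).+1) (fun i => f x 0 i).
pose w := prodw mu.
have Hfx : (\row_i \sum_j a i j * mu i j) = f x.
  by rewrite H3; apply/rowP => i; rewrite mxE.
exists (x, (thOf a II c w, w, sOf a w, @dlt R d l t)); split; last first.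
  by rewrite /proj_xth /= thOf_prod // Hfx.
split => //; split.
  apply/(SsetP II c (@bin01 R) _ w _ _ aH tauH); split => //.
  - exact: sum_prodw.
  - exact: prodw_ge0.
  split => // kk0; rewrite ffunE /bin01; case: ifP; [right|left] => //.
split; last by rewrite /= lastcol_prod // Hfx; apply: HWf.
move=> i j /=; rewrite sOf_prod //.
have [Hk1 Hk2 Hk3] := Hkk i.
have [Ha Hb Hs Hm] := albe (aH i (kk i) Hk1) (Hg i).
rewrite /mu /mug.
under eq_bigr do rewrite mulrC.
rewrite (@sum_mu2 R n _ _ _ _ (fun k0 => aa a i (minn j k0))) //; last by lia.
have [Hu0 [Hun Huj]] := Hu x HX i.
case: (leqP j (kk i)) => Hj.
- have -> : minn j (kk i).+1 = j by apply/minn_idPl; lia.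
  rewrite -mulrDl Hs mul1r aaE.
  case: (posnP j) => Hj0.
    have -> : j = ord0 by apply: val_inj.
    by rewrite Hu0.
  apply: le_trans (Huj j ltac:(rewrite Hj0; lia)) _; by rewrite ge_min lexx orbT.
- have -> : minn j (kk i).+1 = (kk i).+1 by apply/minn_idPr; lia.
  rewrite Hm.
  case: (ltnP j n) => Hjn.
    apply: le_trans (Huj j ltac:(lia)) _; by rewrite ge_min lexx.
  have -> : j = ord_max by apply: val_inj => /=; have := ltn_ord j; lia.
  by rewrite Hun.
Qed.

Lemma Mrel_cvx (R : realFieldType) m d n kap (a : 'M[R]_(d, n.+1)) l tau II c
  (X : 'rV[R]_m -> Prop) (u : 'rV[R]_m -> 'M[R]_(d, n.+1)) (W : 'rV[R]_m * 'rV[R]_d -> Prop)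
  (aH : forall i j, (j < n)%N -> aa a i j < aa a i j.+1) (tauH : tauHyp n l tau) :
  cvx_set X -> (forall i j, convex_fun_on X (fun x => u x i j)) -> cvx_set W ->
  cvx_set (Mset (kap:=kap) (l:=l) a tau II c X u W (@rel01 R)).
Proof.
move=> HXc Huc HWc [x1 [[[th1 w1] s1] d1]] [x2 [[[th2 w2] s2] d2]] t
  [HX1 [HS1 [Hu1 HW1]]] [HX2 [HS2 [Hu2 HW2]]] Ht.
have [Hth1 Hs1 Hw11 Hw01 [Htl1 _]] := (SsetP II c (@rel01 R) _ _ _ _ aH tauH).1 HS1.
have [Hth2 Hs2 Hw12 Hw02 [Htl2 _]] := (SsetP II c (@rel01 R) _ _ _ _ aH tauH).1 HS2.
have /andP [Ht0 Ht1] := Ht.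
have -> : t *: (x1, (th1, w1, s1, d1)) + (1 - t) *: (x2, (th2, w2, s2, d2)) =
  (t *: x1 + (1 - t) *: x2, (t *: th1 + (1 - t) *: th2, t *: w1 + (1 - t) *: w2,
     t *: s1 + (1 - t) *: s2, t *: d1 + (1 - t) *: d2)) by [].
have Ht1' : 0 <= 1 - t by rewrite subr_ge0.
split; first exact: HXc.
split.
  apply: Srel_of => //.
  - by rewrite (linf_comb _ _ _ _ (thOf_lin a II c)) Hth1 Hth2.
  - by rewrite (linf_comb _ _ _ _ (sOf_lin a)) Hs1 Hs2.
  - rewrite (linf_comb _ _ _ _ (sum_lin R (grid d n))) Hw11 Hw12 !scaleRE !mulr1.
    by rewrite addrC subrK.
  - move=> p; rewrite !ffunE /= !scaleRE.
    by apply: addr_ge0; apply: mulr_ge0.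
  - move=> k; rewrite !(linf_comb _ _ _ _ (tl_lin R n _ _)) !ffunE /= !scaleRE.
    have /andP [A1 B1] := Htl1 k; have /andP [A2 B2] := Htl2 k.
    by apply/andP; split; apply: lerD; apply: ler_wpM2l.
split.
  move=> i j; cbn [fst snd]; rewrite !mxE.
  apply: le_trans (Huc i j _ _ t HX1 HX2 Ht) _.
  by apply: lerD; apply: ler_wpM2l.
cbn [fst snd]; rewrite (linf_comb _ _ _ _ (lastcol_lin R d n)).
exact: (HWc (x1, lastcol s1) (x2, lastcol s2) t HW1 HW2 Ht).
Qed.

Unset Implicit Arguments.

Theorem corollary7p4 (R : realType) (m d n kap : nat)
    (a : 'M[R]_(d, n.+1)) (l : 'I_d -> nat) (tau : 'I_d -> nat -> nat)
    (II : 'I_kap -> {set {set 'I_d}}) (c : 'I_kap -> {set 'I_d} -> R)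
    (X : 'rV[R]_m -> Prop) (f : 'rV[R]_m -> 'rV[R]_d)
    (u : 'rV[R]_m -> 'M[R]_(d, n.+1)) (W : 'rV[R]_m * 'rV[R]_d -> Prop) :
  (0 < d)%N -> (0 < n)%N -> (0 < kap)%N ->
  (* a_{i0} < ... < a_{in} *)
  (forall i j, (j < n)%N -> aa a i j < aa a i j.+1) ->
  (* 0 = tau(i,0) < ... < tau(i,l_i) = n *)
  (forall i, tau i 0%N = 0%N /\ tau i (l i) = n /\
             forall t, (t < l i)%N -> (tau i t < tau i t.+1)%N) ->
  (* a_{i0} <= f_i(x) <= a_{in} on X *)
  (forall x, X x -> forall i, a i ord0 <= f x 0 i <= a i ord_max) ->
  (* u convex on the convex set X *)
  cvx_set X -> (forall i j, convex_fun_on X (fun x => u x i j)) ->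
  (forall x, X x -> forall i,
     u x i ord0 = a i ord0 /\ u x i ord_max = f x 0 i /\
     forall j : 'I_n.+1, (0 < j < n)%N -> u x i j <= Num.min (f x 0 i) (a i j)) ->
  (* W convex, containing the graph of f over X *)
  cvx_set W -> (forall x, X x -> W (x, f x)) ->
  ideal_formulation
    (Sset (l:=l) a tau II c (@bin01 R)) (Sset (l:=l) a tau II c (@rel01 R))
    (@proj_fth R d n kap l) (target a l tau II c) (@delta_binary R d n kap l)
  /\
  micp_relaxation
    (Mset (l:=l) a tau II c X u W (@bin01 R)) (Mset (l:=l) a tau II c X u W (@rel01 R))
    (@proj_xth R m d n kap l) (graph_thf II c X f).
Proof.
move=> d0 n0 k0 aH tauH Hf Xc Uc Hu Wc HWf.
split.
- split.
  + move=> y; split.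
    * move=> [P [HS <-]]; by apply: projS_target.
    * by move=> Hy; apply: target_projS.
  + move=> P HP; exact: (extreme_bin aH tauH HP).
- split.
  + move=> y Hy; exact: (graph_projM n0 aH tauH Hf Hu HWf Hy).
  + exact: (Mrel_cvx aH tauH Xc Uc Wc).
Qed.
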